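(* For all integers $v\geq 1$ and $L\geq 0$, \[ \sum_{n_1,\ldots,n_v\geq 0} \frac{q^{\sum_{i=1}^v N_i(N_i+1)+n_v}}{(q)_{n_1}\cdots(q)_{n_{v-1}}(q)_{1+2n_v}}\,\frac{(-1;q^3)_{n_v}}{(-1;q)_{n_v}}\,\frac{(q)_{2L+1}}{(q)_{L-N_1}}\,(1+q-q^{1+n_v}) =\sum_{j=-\infty}^{\infty}\left(\frac{j}{3}\right) q^{\frac{(2v+1)j^2-(2v+3)j}{2}+1} {2L+1 \brack L+j}_q, \] where $N_i=n_i+n_{i+1}+\cdots+n_v$ for $i=1,\ldots,v$ (for $v=1$ the product $(q)_{n_1}\cdots(q)_{n_{v-1}}$ is empty).
   Context: For a variable $a$ and integer $n\ge 0$, $(a;q)_n=(1-a)(1-aq)\cdots(1-aq^{n-1})$, and $(q)_n=(q;q)_n$; by convention $1/(q)_n=0$ for negative integers $n$. The $q$-binomial coefficient is ${A \brack B}_q=\frac{(q;q)_A}{(q;q)_B(q;q)_{A-B}}$ if $0\le B\le A$ are integers, and $0$ otherwise. $\left(\frac{j}{3}\right)$ is the Legendre symbol modulo 3: it equals $1$ if $j\equiv 1 \pmod 3$, $-1$ if $j\equiv -1\pmod 3$, and $0$ if $3\mid j$. *)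

(* Defs.v *)
From mathcomp Require Import all_boot all_order all_algebra.
Set Implicit Arguments. Unset Strict Implicit. Unset Printing Implicit Defensive.
Import Order.TTheory GRing.Theory Num.Theory.
Local Open Scope ring_scope.

Section QDefs.
Variable R : numFieldType.
Implicit Types (q a : R).

Definition qpoch a q (n : nat) : R := \prod_(i < n) (1 - a * q ^+ i).

Definition qfac q (n : nat) : R := qpoch q q n.

(* 1/(q)_n for an integer n, with the convention 1/(q)_n = 0 for n < 0 *)
Definition inv_qfac q (n : int) : R :=
  match n with Posz m => (qfac q m)^-1 | Negz _ => 0 end.

Definition qbinom q (A B : int) : R :=
  match A, B with
  | Posz a, Posz b => if (b <= a)%N then qfac q a / (qfac q b * qfac q (a - b)) else 0
  | _, _ => 0
  end.

Definition leg3 (j : int) : R :=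
  if (j %% 3)%Z == 1 then 1 else if (j %% 3)%Z == 2 then -1 else 0.

(* For n : 'I_v -> nat encoding (n_1,...,n_v) as (n 0, ..., n (v-1)):
   N_{i+1} = n_{i+1} + ... + n_v *)
Definition Ncap (v : nat) (n : 'I_v -> nat) (i : nat) : nat :=
  \sum_(k < v | (i <= k)%N) n k.

Definition nlast (v : nat) (n : 'I_v -> nat) : nat :=
  \sum_(k < v | val k == v.-1) n k.

Definition lhs_term (v L : nat) q (n : 'I_v -> nat) : R :=
  let nv := nlast n in
  let N1 := Ncap n 0 in
  q ^+ ((\sum_(i < v) Ncap n i * (Ncap n i).+1) + nv)
  * (\prod_(k < v | (val k < v.-1)%N) (qfac q (n k))^-1)
  * (qfac q (1 + 2 * nv))^-1
  * (qpoch (-1) (q ^+ 3) nv / qpoch (-1) q nv)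
  * (qfac q (2 * L + 1) * inv_qfac q (L%:Z - N1%:Z))
  * (1 + q - q ^+ (1 + nv)).

(* exponent ((2v+1) j^2 - (2v+3) j)/2 + 1 (the numerator is always even) *)
Definition rhs_exp (v : nat) (j : int) : int :=
  ((((2 * v + 1)%N%:Z * j ^+ 2 - (2 * v + 3)%N%:Z * j) %/ 2)%Z + 1).

Definition rhs_term (v L : nat) q (j : int) : R :=
  leg3 j * q ^ rhs_exp v j * qbinom q (2 * L + 1)%N%:Z (L%:Z + j).

End QDefs.

(* Main.v *)
Require Import Defs.
From mathcomp Require Import all_boot all_order all_algebra.
From HB Require Import structures.
From mathcomp Require Import ring zify.
Import Order.TTheory GRing.Theory Num.Theory.
Local Open Scope ring_scope.
Set Implicit Arguments. Unset Strict Implicit. Unset Printing Implicit Defensive.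

Section Basics.
Variable R : numFieldType.
Variable q : R.
Hypothesis hq : `|q| < 1.

Notation f := (qfac q).

Lemma qfac0 : f 0 = 1.
Proof. by rewrite /qfac /qpoch big_ord0. Qed.

Lemma qfacS n : f n.+1 = f n * (1 - q ^+ n.+1).
Proof. by rewrite /qfac /qpoch big_ord_recr /= exprS. Qed.

Lemma qpowN1 n : (0 < n)%N -> q ^+ n != 1.
Proof.
move=> n0; apply/eqP => h.
have : `|q ^+ n| < 1 by rewrite normrX exprn_ilt1 // -lt0n.
by rewrite h normr1 ltxx.
Qed.

Lemma qpowNm1 n : (0 < n)%N -> q ^+ n != -1.
Proof.
move=> n0; apply/eqP => h.
have : `|q ^+ n| < 1 by rewrite normrX exprn_ilt1 // -lt0n.
by rewrite h normrN normr1 ltxx.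
Qed.

Lemma qfac_neq0 n : f n != 0.
Proof.
elim: n => [|n IH]; first by rewrite qfac0 oner_neq0.
by rewrite qfacS mulf_neq0 // subr_eq0 eq_sym qpowN1.
Qed.

Lemma onepq_neq0 i : 1 + q ^+ i != 0.
Proof.
case: i => [|i]; first by rewrite expr0 -[1 + 1]/(2%:R) pnatr_eq0.
by rewrite addrC addr_eq0 qpowNm1.
Qed.

End Basics.

Section Key.
Variable R : numFieldType.
Variable q : R.
Hypothesis hq : `|q| < 1.

Notation f := (qfac q).
Let fn0 := qfac_neq0 hq.

Definition Ysum n c := \sum_(0 <= m < n.+1) q ^+ (m * m + c * m) / (f (n - m) * f m * f (c + m)).

Lemma Y_point m d c :
  (1 - q ^+ (m + d).+1) * (q ^+ (m.+1 * m.+1 + c * m.+1) / (f ((m + d) - m) * f m.+1 * f (c + m.+1)))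
  = q ^+ (c + (m + d).+1) * (q ^+ (m * m + c.+1 * m) / (f ((m + d) - m) * f m * f (c.+1 + m)))
    + (if (m < m + d)%N then q ^+ (m.+1 * m.+1 + c * m.+1) / (f ((m + d) - m.+1) * f m.+1 * f (c + m.+1)) else 0).
Proof.
rewrite addKn.
have e1 : (c + m.+1 = c.+1 + m)%N by lia.
rewrite e1 qfacS.
have ha : 1 - q ^+ m.+1 != 0 by rewrite subr_eq0 eq_sym qpowN1.
case: d => [|d].
  rewrite addn0 ltnn addr0.
  have -> : (m.+1 * m.+1 + c * m.+1 = (c + m.+1) + (m * m + c.+1 * m))%N by ring.
  rewrite exprD; field.
  by rewrite !fn0 ha.
have -> : (m < m + d.+1)%N by lia.
have -> : (m + d.+1 - m.+1 = d)%N by lia.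
rewrite [f d.+1]qfacS.
have hb : 1 - q ^+ d.+1 != 0 by rewrite subr_eq0 eq_sym qpowN1.
have -> : (m.+1 * m.+1 + c * m.+1 = (c + m.+1) + (m * m + c.+1 * m))%N by ring.
have -> : (c + (m + d.+1).+1 = (c + m.+1) + d.+1)%N by ring.
have -> : ((m + d.+1).+1 = m.+1 + d.+1)%N by ring.
rewrite !exprD.
field.
by rewrite !fn0 ha hb.
Qed.


Lemma Y_step n c : (1 - q ^+ n.+1) * Ysum n.+1 c = Ysum n c + q ^+ (c + n.+1) * Ysum n c.+1.
Proof.
rewrite /Ysum [in LHS]big_nat_recl // mulrDr [in LHS]mulr_sumr.
rewrite (eq_big_nat _ _ (F2 := fun i => q ^+ (c + n.+1) * (q ^+ (i * i + c.+1 * i) / (f (n - i) * f i * f (c.+1 + i)))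
    + (if (i < n)%N then q ^+ (i.+1 * i.+1 + c * i.+1) / (f (n - i.+1) * f i.+1 * f (c + i.+1)) else 0))); last first.
  move=> i /andP[_ hi].
  have := Y_point i (n - i) c.
  rewrite subnKC; last by rewrite -ltnS.
  by rewrite subSS.
rewrite big_split /= -[in LHS]mulr_sumr.
rewrite [in RHS](big_nat_recl n) //.
rewrite [X in _ + (_ + X) = _]big_nat_recr //= ltnn addr0.
rewrite [X in _ + (_ + X) = _](eq_big_nat _ _ (F2 := fun i => q ^+ (i.+1 * i.+1 + c * i.+1) / (f (n - i.+1) * f i.+1 * f (c + i.+1)))); last by move=> i /andP[_ ->].
rewrite !muln0 !addn0 !subn0 qfacS !qfac0 expr0.
have hn : 1 - q ^+ n.+1 != 0 by rewrite subr_eq0 eq_sym qpowN1.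
field.
by rewrite !fn0 hn.
Qed.

Lemma Ysum_closed n c : Ysum n c = (f n * f (c + n))^-1.
Proof.
elim: n c => [|n IH] c.
  rewrite /Ysum big_nat1 !muln0 !addn0 subn0 qfac0 expr0.
  field. by rewrite !fn0.
have hn : 1 - q ^+ n.+1 != 0 by rewrite subr_eq0 eq_sym qpowN1.
apply: (mulfI hn).
rewrite Y_step !IH.
have -> : (c.+1 + n = (c + n).+1)%N by lia.
have -> : (c + n.+1 = (c + n).+1)%N by lia.
rewrite !qfacS.
have hc : 1 - q ^+ (c + n).+1 != 0 by rewrite subr_eq0 eq_sym qpowN1.
field.
by rewrite !fn0 hn hc.
Qed.

End Key.

Section Bailey.
Variable R : numFieldType.
Variable q : R.
Hypothesis hq : `|q| < 1.

Notation f := (qfac q).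
Let fn0 := qfac_neq0 hq.

Lemma shift_sum (r L : nat) (T : nat -> R) : (r <= L)%N ->
  \sum_(0 <= k < L.+1) (if (r <= k)%N then T k else 0) = \sum_(0 <= m < (L - r).+1) T (m + r)%N.
Proof.
move=> hr.
rewrite -big_mkcond /=.
rewrite -(big_nat_widenl r 0 L.+1 (fun _ => true)) //.
rewrite -{1}(add0n r) big_addn subSn //.
Qed.

Lemma bailey (al be : nat -> R) :
  (forall L, be L = \sum_(0 <= r < L.+1) al r / (f (L - r) * f (L + r).+1)) ->
  forall L, \sum_(0 <= k < L.+1) q ^+ (k * k.+1) * be k / f (L - k)
   = \sum_(0 <= r < L.+1) q ^+ (r * r.+1) * al r / (f (L - r) * f (L + r).+1).
Proof.
move=> hbe L.
rewrite (eq_big_nat _ _ (F2 := fun k => \sum_(0 <= r < L.+1)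
   (if (r <= k)%N then q ^+ (k * k.+1) * al r / (f (L - k) * (f (k - r) * f (k + r).+1)) else 0))); last first.
  move=> k /andP[_ hk].
  rewrite hbe (big_nat_widen 0 k.+1 L.+1) // big_mkcond /= mulr_sumr big_distrl /=.
  apply: eq_big_nat => r _; rewrite ltnS.
  case: (r <= k)%N; last by rewrite mulr0 mul0r.
  field. by rewrite !fn0.
rewrite (exchange_big_nat _ 0 L.+1 0 L.+1 predT predT) /=.
apply: eq_big_nat => r /andP[_ hr].
rewrite ltnS in hr.
rewrite shift_sum //.
rewrite (eq_big_nat _ _ (F2 := fun m => q ^+ (r * r.+1) * al r *
   (q ^+ (m * m + (r.*2.+1) * m) / (f (L - r - m) * f m * f (r.*2.+1 + m))))); last first.
  move=> m /andP[_ hm].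
  have -> : ((m + r) * (m + r).+1 = r * r.+1 + (m * m + r.*2.+1 * m))%N by rewrite -addnn; ring.
  have -> : (m + r - r = m)%N by lia.
  have -> : (L - (m + r) = L - r - m)%N by lia.
  have -> : ((m + r + r).+1 = r.*2.+1 + m)%N by rewrite -addnn; lia.
  rewrite exprD; field. by rewrite !fn0.
rewrite -mulr_sumr.
have := Ysum_closed hq (L - r) r.*2.+1.
rewrite /Ysum => ->.
have -> : (r.*2.+1 + (L - r) = (L + r).+1)%N by rewrite -addnn; lia.
field. by rewrite !fn0.
Qed.

End Bailey.

Section ERing.
Variable R : comNzRingType.
Definition Eis := (R * R)%type.
HB.instance Definition _ := GRing.Zmodule.on Eis.

Definition emul (x y : Eis) : Eis :=
  (x.1 * y.1 - x.2 * y.2, x.1 * y.2 + x.2 * y.1 - x.2 * y.2).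
Definition eone : Eis := (1, 0).

Fact emulA : associative emul.
Proof. by case=> a b [c d] [e g]; rewrite /emul /=; congr pair; ring. Qed.
Fact emulC : commutative emul.
Proof. by case=> a b [c d]; rewrite /emul /=; congr pair; ring. Qed.
Fact emul1 : left_id eone emul.
Proof. by case=> a b; rewrite /emul /=; congr pair; ring. Qed.
Lemma eaddE (x y : Eis) : x + y = (x.1 + y.1, x.2 + y.2).
Proof. by []. Qed.
Fact emulDl : left_distributive emul +%R.
Proof. by case=> a b [c d] [e g]; rewrite /emul !eaddE /=; congr pair; ring. Qed.
Fact eone_neq0 : eone != 0.
Proof. by rewrite /eone; apply/eqP => -[] /eqP; rewrite oner_eq0. Qed.

HB.instance Definition _ := GRing.Zmodule_isComNzRing.Build Eis emulA emulC emul1 emulDl eone_neq0.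

End ERing.

Section ELemmas.
Variable R : comNzRingType.
Local Notation E := (Eis R).
Definition emb (x : R) : E := (x, 0).
Definition zE : E := (0, 1).

Lemma eM (x y : E) : x * y = (x.1 * y.1 - x.2 * y.2, x.1 * y.2 + x.2 * y.1 - x.2 * y.2).
Proof. by []. Qed.
Lemma eA (x y : E) : x + y = (x.1 + y.1, x.2 + y.2).
Proof. by []. Qed.
Lemma eN (x : E) : - x = (- x.1, - x.2).
Proof. by []. Qed.
Lemma e1 : (1 : E) = (1, 0).
Proof. by []. Qed.
Lemma e0 : (0 : E) = (0, 0).
Proof. by []. Qed.

Lemma embD x y : emb (x + y) = emb x + emb y.
Proof. by rewrite /emb eA /= addr0. Qed.
Lemma embM x y : emb (x * y) = emb x * emb y.
Proof. by rewrite /emb eM /=; congr pair; ring. Qed.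
Lemma emb1 : emb 1 = 1.
Proof. by []. Qed.
Lemma emb0 : emb 0 = 0.
Proof. by []. Qed.
Lemma embN x : emb (- x) = - emb x.
Proof. by rewrite /emb eN oppr0. Qed.
Lemma embB x y : emb (x - y) = emb x - emb y.
Proof. by rewrite embD embN. Qed.
Lemma embX x n : emb (x ^+ n) = emb x ^+ n.
Proof. by elim: n => [|n IH]; rewrite ?expr0 // !exprS embM IH. Qed.

Lemma zz : zE * zE = - 1 - zE.
Proof. by rewrite eM /zE eA !eN e1 /=; congr pair; ring. Qed.
Lemma z3 : zE ^+ 3 = 1.
Proof. rewrite !exprS expr0 mulr1 zz /zE eA !eN e1 eM /=. congr pair; ring. Qed.

Lemma snd_sum (I : Type) (r : seq I) (P : pred I) (F : I -> E) :
  (\sum_(i <- r | P i) F i).2 = \sum_(i <- r | P i) (F i).2.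
Proof. by elim/big_rec2: _ => // i y1 y2 _ <-. Qed.
Lemma snd_embM c (w : E) : (emb c * w).2 = c * w.2.
Proof. by rewrite eM /= !mul0r subr0 addr0. Qed.

Lemma zpow_mod n : zE ^+ n = zE ^+ (n %% 3).
Proof. by rewrite {1}(divn_eq n 3) exprD mulnC exprM z3 expr1n mul1r. Qed.

End ELemmas.

Lemma sum_step (V : zmodType) (c c' d : nat -> V) N :
  c' 0%N = c 0%N -> (forall k, (k <= N)%N -> c' k.+1 = (if (k < N)%N then c k.+1 else 0) + d k) ->
  \sum_(0 <= k < N.+2) c' k = \sum_(0 <= k < N.+1) c k + \sum_(0 <= k < N.+1) d k.
Proof.
move=> h0 hS.
rewrite big_nat_recl // (eq_big_nat _ _ (F2 := fun k => (if (k < N)%N then c k.+1 else 0) + d k)); last first.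
  by move=> k /andP[_ hk]; apply: hS; rewrite -ltnS.
rewrite big_split /= addrA; congr (_ + _).
rewrite big_nat_recr //= ltnn addr0 h0 [in RHS]big_nat_recl //; congr (_ + _).
by apply: eq_big_nat => k /andP[_ ->].
Qed.

Section QBin.
Variable R : numFieldType.
Variable q : R.
Hypothesis hq : `|q| < 1.

Notation f := (qfac q).
Let fn0 := qfac_neq0 hq.
Local Notation E := (Eis R).

Definition qb n k := f n / (f k * f (n - k)).

Lemma qb0 n : qb n 0 = 1.
Proof. by rewrite /qb qfac0 mul1r subn0 divff // fn0. Qed.

Lemma qbnn n : qb n n = 1.
Proof. by rewrite /qb subnn qfac0 mulr1 divff // fn0. Qed.

Lemma qb_sym n k : (k <= n)%N -> qb n (n - k) = qb n k.
Proof. by move=> h; rewrite /qb subKn // [f (n - k) * _]mulrC. Qed.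

Lemma qb_pascal n k : (k <= n)%N ->
  qb n.+1 k.+1 = (if (k < n)%N then qb n k.+1 else 0) + q ^+ (n - k) * qb n k.
Proof.
move=> hk; rewrite /qb subSS.
case: ltnP => hkn; last first.
  have -> : k = n by apply/eqP; rewrite eqn_leq hk hkn.
  by rewrite subnn add0r qfac0 expr0 mul1r !mulr1 !divff ?fn0.
have [d hd] : exists d, n = (k + d.+1)%N by exists (n - k.+1)%N; lia.
rewrite hd.
have -> : (k + d.+1 - k = d.+1)%N by lia.
have -> : (k + d.+1 - k.+1 = d)%N by lia.
rewrite !qfacS -addSn exprD.
have ha : 1 - q ^+ k.+1 != 0 by rewrite subr_eq0 eq_sym qpowN1.
have hb : 1 - q ^+ d.+1 != 0 by rewrite subr_eq0 eq_sym qpowN1.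
field.
by rewrite !fn0 ha hb.
Qed.

Lemma binS2 k : 'C(k.+1, 2) = ('C(k, 2) + k)%N.
Proof. by rewrite binS bin1. Qed.

Lemma qbin_thm (y : E) N :
  \prod_(i < N) (1 + y * emb (q ^+ i)) = \sum_(0 <= k < N.+1) emb (qb N k * q ^+ 'C(k, 2)) * y ^+ k.
Proof.
elim: N => [|N IH].
  by rewrite big_ord0 big_nat1 qb0 bin0n expr0 mulr1 expr0 mulr1.
rewrite big_ord_recr /= IH mulrDr mulr1 mulr_suml.
rewrite (sum_step (c := fun k => emb (qb N k * q ^+ 'C(k, 2)) * y ^+ k)
   (d := fun k => emb (qb N k * q ^+ 'C(k, 2)) * y ^+ k * (y * emb (q ^+ N)))) //.
  by rewrite !qb0.
move=> k hk.
rewrite qb_pascal // binS2.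
have eN : emb (q ^+ N) = emb q ^+ (N - k) * emb q ^+ k by rewrite embX -exprD subnK.
rewrite eN.
set a := qb N k.+1; set b := qb N k.
case: ltnP => hkN.
  rewrite !embM !embD !embX !embM !embX !exprD [y ^+ k.+1]exprS; ring.
rewrite !add0r !embM !embX !exprD [y ^+ k.+1]exprS; ring.
Qed.


Definition te b k : nat := if (b <= k)%N then 'C(k - b, 2) else 'C((b - k).+1, 2).

Lemma te_step b k : (te b k.+1 + b = te b k + k)%N.
Proof.
rewrite /te; case: (leqP b k) => h1.
  have -> : (b <= k.+1)%N by lia.
  have -> : (k.+1 - b = (k - b).+1)%N by lia.
  rewrite binS2; lia.
case: (leqP b k.+1) => h2.
  have -> : (k.+1 - b = 0)%N by lia.
  have -> : (b - k = 1)%N by lia.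
  rewrite bin0n binn; lia.
have -> : (b - k = (b - k.+1).+1)%N by lia.
rewrite (binS2 (b - k.+1).+1); lia.
Qed.

Lemma te_rev b k : (k <= b)%N -> te b (b - k) = 'C(k.+1, 2).
Proof.
rewrite /te; case: k => [|k] hk.
  by rewrite subn0 leqnn subnn.
have -> : (b <= b - k.+1)%N = false by apply/negbTE; rewrite -ltnNge; lia.
by rewrite subKn.
Qed.

Definition Gs a b := \sum_(0 <= k < (a + b).+1) emb (qb (a + b) k * q ^+ (te b k)) * zE R ^+ (k + b.*2).

Lemma G_closed a b : Gs a b =
  \prod_(i < a) (1 + zE R * emb (q ^+ i)) * \prod_(i < b) (1 + zE R ^+ 2 * emb (q ^+ i.+1)).
Proof.
elim: a => [|a IH].
  rewrite big_ord0 mul1r /Gs add0n big_nat_rev /=.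
  rewrite (eq_big_nat _ _ (F2 := fun k => emb (qb b k * q ^+ 'C(k, 2)) * (zE R ^+ 2 * emb q) ^+ k)); last first.
    move=> k /andP[_ hk]; rewrite add0n subSS.
    rewrite ltnS in hk.
    rewrite qb_sym // te_rev // binS2 exprD !embM !embX exprMn -exprM.
    have -> : zE R ^+ (b - k + b.*2) = zE R ^+ (2 * k) by rewrite zpow_mod [in RHS]zpow_mod; congr (_ ^+ _); lia.
    ring.
  rewrite -qbin_thm; apply: eq_bigr => i _.
  by rewrite [q ^+ i.+1]exprS embM mulrA.
rewrite big_ord_recr /= mulrAC -IH /Gs addSn.
rewrite mulrDr mulr1 mulr_suml.
rewrite (sum_step (c := fun k => emb (qb (a + b) k * q ^+ te b k) * zE R ^+ (k + b.*2))
   (d := fun k => emb (qb (a + b) k * q ^+ te b k) * zE R ^+ (k + b.*2) * (zE R * emb (q ^+ a)))) //.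
  by rewrite !qb0.
move=> k hk.
have ex : ((a + b) - k + te b k.+1 = te b k + a)%N by have := te_step b k; lia.
have hs : qb (a + b).+1 k.+1 * q ^+ (te b k.+1) =
   (if (k < a + b)%N then qb (a + b) k.+1 * q ^+ (te b k.+1) else 0) + qb (a + b) k * q ^+ (te b k) * q ^+ a.
  rewrite qb_pascal //.
  have -> : qb (a + b) k * q ^+ te b k * q ^+ a = qb (a + b) k * (q ^+ (a + b - k) * q ^+ te b k.+1).
    by rewrite -!mulrA -!exprD ex.
  by case: ifP => _; ring.
rewrite hs addSn exprS.
case: ifP => _.
  rewrite embD !embM; ring.
rewrite !add0r !embM; ring.
Qed.

End QBin.

Section Seed.
Variable R : numFieldType.
Variable q : R.
Hypothesis hq : `|q| < 1.

Notation f := (qfac q).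
Let fn0 := qfac_neq0 hq.
Local Notation E := (Eis R).
Local Notation z := (zE R).

Definition legn (n : nat) : R := leg3 R (n%:Z).

Lemma legnE n : legn n = if (n %% 3 == 1)%N then 1 else if (n %% 3 == 2)%N then -1 else 0.
Proof. by rewrite /legn /leg3 modz_nat. Qed.

Lemma legn_neg t r : (r <= 3 * t)%N -> legn (3 * t - r) = - legn r.
Proof.
move=> h; rewrite !legnE.
have : (r %% 3 < 3)%N by rewrite ltn_mod.
case e: (r %% 3)%N => [|[|[|m]]] // _.
- have -> : ((3 * t - r) %% 3 = 0)%N by lia.
  by rewrite oppr0.
- have -> : ((3 * t - r) %% 3 = 2)%N by lia.
  by [].
- have -> : ((3 * t - r) %% 3 = 1)%N by lia.
  by rewrite opprK.
Qed.

Lemma legn_add3 t r : legn (3 * t + r) = legn r.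
Proof. by rewrite !legnE; have -> : ((3 * t + r) %% 3 = r %% 3)%N by lia. Qed.

Lemma zpow2 n : (z ^+ n).2 = legn n.
Proof.
rewrite zpow_mod legnE.
have : (n %% 3 < 3)%N by rewrite ltn_mod.
case: (n %% 3)%N => [|[|[|m]]] // _.
by rewrite expr2 eM /=; ring.
Qed.

Lemma z2E : z ^+ 2 = (-1, -1).
Proof. by rewrite expr2 eM /=; congr pair; ring. Qed.

Lemma phi0 : z * z + z + 1 = 0.
Proof. by rewrite zz; ring. Qed.

Lemma by_phi (x y h : E) : x - y = h * (z * z + z + 1) -> x = y.
Proof. by rewrite phi0 mulr0 => /eqP; rewrite subr_eq0 => /eqP. Qed.

Definition Dp L := \prod_(i < L) (1 - q ^+ i + q ^+ i * q ^+ i).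

Lemma zQ L : z * (\prod_(i < L) (1 + z * emb (q ^+ i)) * \prod_(i < L.+1) (1 + z ^+ 2 * emb (q ^+ i.+1)))
  = - emb (Dp L) * ((1 + z ^+ 2 * emb (q ^+ L)) * (1 + z ^+ 2 * emb (q ^+ L.+1))).
Proof.
elim: L => [|L IH].
  rewrite big_ord0 big_ord1 /Dp big_ord0 expr0 emb1.
  apply: (by_phi (h := 1 + z ^+ 2 * emb (q ^+ 1))); ring.
rewrite [X in z * (X * _)]big_ord_recr [X in z * (_ * X)]big_ord_recr /=.
have -> : forall P1 P2 a c : E, z * (P1 * a * (P2 * c)) = z * (P1 * P2) * (a * c) by move=> *; ring.
rewrite IH /Dp big_ord_recr /= (embM (\prod_(i < L) (1 - q ^+ i + q ^+ i * q ^+ i))) embD embB emb1 (embM (q ^+ L)).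
set A := emb (q ^+ L); set B := emb (q ^+ L.+1); set C := emb (q ^+ L.+2).
set ED := emb (\prod_(i < L) _).
apply: (by_phi (h := - ED * (1 + z ^+ 2 * B) * (1 + z ^+ 2 * C) * (A + (z - 1) * A * A))); ring.
Qed.

Lemma pairE2 a b : (1 + z ^+ 2 * emb a) * (1 + z ^+ 2 * emb b) = (1 - a - b, a * b - a - b) :> E.
Proof. by rewrite z2E /emb !eM !eA e1 /=; congr pair; ring. Qed.

Lemma seedS L :
  \sum_(0 <= k < (L + L.+1).+1) qb q (L + L.+1) k * q ^+ (te L.+1 k) * legn (k + (L.+1).*2).+1
  = Dp L * (q ^+ L + q ^+ L.+1 - q ^+ L * q ^+ L.+1).
Proof.
have h := zQ L.
rewrite -G_closed // /Gs mulr_sumr in h.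
have := congr1 snd h.
rewrite snd_sum pairE2 => H.
have -> : Dp L * (q ^+ L + q ^+ L.+1 - q ^+ L * q ^+ L.+1) =
   (- emb (Dp L) * (1 - q ^+ L - q ^+ L.+1, q ^+ L * q ^+ L.+1 - q ^+ L - q ^+ L.+1)).2.
  by rewrite -embN snd_embM /=; ring.
rewrite -H; apply: eq_big_nat => k _.
by rewrite mulrCA snd_embM -exprS zpow2.
Qed.


Definition alph r := legn r.+1 * q ^+ 'C(r, 2) - legn r * q ^+ 'C(r.+2, 2).

Lemma seed_alpha L :
  \sum_(0 <= r < L.+1) alph r * qb q (L + L.+1) (L - r) = Dp L * (q ^+ L + q ^+ L.+1 - q ^+ L * q ^+ L.+1).
Proof.
have hle : (L.+1 <= (L + L.+1).+1)%N by lia.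
rewrite -seedS (big_cat_nat (leq0n L.+1) hle) /=.
rewrite [X in _ = X + _]big_nat_rev /= (big_addn 0 (L + L.+1).+1 L.+1).
have -> : ((L + L.+1).+1 - L.+1 = L.+1)%N by lia.
rewrite -big_split /=.
apply: eq_big_nat => r /andP[_ hr]; rewrite ltnS in hr.
rewrite add0n subSS.
have t1 : te L.+1 (L - r) = 'C(r.+2, 2).
  rewrite /te ifF; last by apply/negbTE; rewrite -ltnNge; lia.
  by have -> : (L.+1 - (L - r) = r.+1)%N by lia.
have t2 : te L.+1 (r + L.+1) = 'C(r, 2) by rewrite /te ifT ?addnK //; lia.
have l1 : legn (L - r + L.+1.*2).+1 = - legn r.
  have -> : ((L - r + L.+1.*2).+1 = 3 * L.+1 - r)%N by rewrite -addnn; lia.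
  by rewrite legn_neg //; lia.
have l2 : legn (r + L.+1 + L.+1.*2).+1 = legn r.+1.
  have -> : ((r + L.+1 + L.+1.*2).+1 = 3 * L.+1 + r.+1)%N by rewrite -addnn; lia.
  by rewrite legn_add3.
have e3 : qb q (L + L.+1) (r + L.+1) = qb q (L + L.+1) (L - r).
  have -> : (r + L.+1 = (L + L.+1) - (L - r))%N by lia.
  by rewrite qb_sym //; lia.
rewrite t1 t2 l1 l2 e3 /alph; ring.
Qed.

Definition Bs L := q ^+ L * (f (1 + 2 * L))^-1 * (qpoch (-1) (q ^+ 3) L / qpoch (-1) q L) * (1 + q - q ^+ (1 + L)).

Lemma ratioD L : qpoch (-1) (q ^+ 3) L / qpoch (-1) q L = Dp L.
Proof.
have hp : qpoch (-1) q L != 0.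
  by rewrite /qpoch; apply/prodf_neq0 => i _; rewrite mulN1r opprK onepq_neq0.
apply: (mulIf hp); rewrite divfK //.
rewrite /qpoch /Dp -big_split /=; apply: eq_bigr => i _.
rewrite !mulN1r !opprK -exprM mulnC exprM; ring.
Qed.

Lemma seed_rel L : Bs L = \sum_(0 <= r < L.+1) alph r / (f (L - r) * f (L + r).+1).
Proof.
have H := seed_alpha L.
have -> : \sum_(0 <= r < L.+1) alph r / (f (L - r) * f (L + r).+1) =
   (\sum_(0 <= r < L.+1) alph r * qb q (L + L.+1) (L - r)) / f (L + L.+1).
  rewrite mulr_suml; apply: eq_big_nat => r /andP[_ hr]; rewrite ltnS in hr.
  rewrite /qb.
  have -> : (L + L.+1 - (L - r) = (L + r).+1)%N by lia.
  field; by rewrite !fn0.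
rewrite H /Bs ratioD.
have -> : (1 + 2 * L = L + L.+1)%N by lia.
rewrite (addnC 1%N L) addn1 !exprS.
field; by rewrite !fn0.
Qed.

End Seed.

Lemma bin2_2 r : ('C(r, 2) * 2 = r * r.-1)%N.
Proof.
elim: r => [|r IH] //.
rewrite binS2 mulnDl IH /=; case: r {IH} => [|r] //=; nia.
Qed.

Section Final.
Variable R : numFieldType.
Variable q : R.
Hypothesis hq : `|q| < 1.

Notation f := (qfac q).
Let fn0 := qfac_neq0 hq.

Fixpoint bet (v : nat) (L : nat) : R :=
  match v with
  | 0%N => Bs q L
  | v'.+1 => \sum_(0 <= k < L.+1) q ^+ (k * k.+1) * bet v' k / f (L - k)
  end.

Lemma bet_closed v L :
  bet v L = \sum_(0 <= r < L.+1) q ^+ (v * (r * r.+1)) * alph q r / (f (L - r) * f (L + r).+1).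
Proof.
elim: v L => [|v IH] L.
  rewrite /= seed_rel //; apply: eq_big_nat => r _; by rewrite mul0n expr0 mul1r.
rewrite /= (bailey hq (al := fun r => q ^+ (v * (r * r.+1)) * alph q r) IH).
apply: eq_big_nat => r _; by rewrite mulrA -exprD mulSn.
Qed.

Lemma rhs_exp_pos v r : rhs_exp v (Posz r.+1) = Posz (v * (r * r.+1) + 'C(r, 2))%N.
Proof.
rewrite /rhs_exp.
have hb := bin2_2 r.
have -> : ((2 * v + 1)%N%:Z * (Posz r.+1) ^+ 2 - (2 * v + 3)%N%:Z * Posz r.+1)%R
   = ((Posz (v * (r * r.+1) + 'C(r, 2))%N - 1) * 2)%R.
  rewrite expr2; nia.
rewrite mulzK //; lia.
Qed.

Lemma rhs_exp_neg v r : rhs_exp v (- Posz r) = Posz (v * (r * r.+1) + 'C(r.+2, 2))%N.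
Proof.
rewrite /rhs_exp.
have hb := bin2_2 r.+2.
have -> : ((2 * v + 1)%N%:Z * (- Posz r) ^+ 2 - (2 * v + 3)%N%:Z * (- Posz r))%R
   = ((Posz (v * (r * r.+1) + 'C(r.+2, 2))%N - 1) * 2)%R.
  rewrite expr2; nia.
rewrite mulzK //; lia.
Qed.


Lemma leg3_neg r : leg3 R (- Posz r) = - legn R r.
Proof.
rewrite -(legn_neg q (t := r)); last by lia.
rewrite /legn /leg3.
by rewrite modz_nat; have -> : ((- Posz r) %% 3)%Z = Posz ((3 * r - r) %% 3)%N by lia.
Qed.

Lemma qbinom_pos a b : qbinom q (Posz a) (Posz b) = if (b <= a)%N then qb q a b else 0.
Proof. by []. Qed.

Lemma sum_trunc (F : nat -> R) L N : (L <= N)%N ->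
  \sum_(0 <= r < N) (if (r < L)%N then F r else 0) = \sum_(0 <= r < L) F r.
Proof.
move=> hLN; rewrite (big_cat_nat (leq0n L) hLN) /=.
rewrite [X in _ + X]big_nat_cond [X in _ + X]big1 ?addr0.
  by apply: eq_big_nat => r /andP[_ ->].
by move=> i /andP[/andP[hi _] _]; rewrite ltnNge hi.
Qed.

Lemma rhs_eq v L M : (L < M)%N ->
  \sum_(0 <= k < 2 * M + 1) rhs_term v L q (k%:Z - M%:Z) =
  \sum_(0 <= r < L.+1) q ^+ (v * (r * r.+1)) * alph q r * qb q (L + L.+1) (L - r).
Proof.
move=> hLM.
have h1 : (M.+1 <= 2 * M + 1)%N by lia.
rewrite (big_cat_nat (leq0n M.+1) h1) /= big_nat_rev /=.
rewrite (big_addn 0 (2 * M + 1) M.+1).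
have -> : (2 * M + 1 - M.+1 = M)%N by lia.
have e21 : (2 * L + 1 = L + L.+1)%N by lia.
rewrite (eq_big_nat _ _ (F2 := fun r => if (r < L.+1)%N then
   - legn R r * q ^+ (v * (r * r.+1) + 'C(r.+2, 2)) * qb q (L + L.+1) (L - r) else 0)); last first.
  move=> r /andP[_ hr]; rewrite ltnS in hr.
  rewrite add0n subSS.
  have -> : (Posz (M - r) - Posz M = - Posz r) by lia.
  rewrite /rhs_term leg3_neg rhs_exp_neg.
  case: ltnP => hrL.
    have -> : (Posz L + - Posz r = Posz (L - r)) by lia.
    rewrite /qbinom ifT; last by lia.
    by rewrite e21.
  case E: (Posz L + - Posz r) => [n|n]; first by lia.
  by rewrite /qbinom mulr0.
rewrite [X in _ + X = _](eq_big_nat _ _ (F2 := fun r => if (r < L.+1)%N then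
   legn R r.+1 * q ^+ (v * (r * r.+1) + 'C(r, 2)) * qb q (L + L.+1) (L - r) else 0)); last first.
  move=> r /andP[_ hr].
  have -> : (Posz (r + M.+1) - Posz M = Posz r.+1) by lia.
  rewrite /rhs_term rhs_exp_pos.
  have -> : (Posz L + Posz r.+1 = Posz (L + r.+1)) by lia.
  rewrite qbinom_pos.
  case: ltnP => hrL.
    rewrite ifT; last by lia.
    rewrite e21.
    have -> : (L + r.+1 = (L + L.+1) - (L - r))%N by lia.
    by rewrite qb_sym //; lia.
  by rewrite ifF ?mulr0 //; apply/negbTE; lia.
rewrite !sum_trunc //; last by lia.
rewrite -big_split /=; apply: eq_big_nat => r _.
rewrite /alph !exprD; ring.
Qed.

End Final.

Definition fcons (w M : nat) (x : 'I_M) (g : {ffun 'I_w -> 'I_M}) : {ffun 'I_w.+1 -> 'I_M} :=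
  [ffun i => if unlift ord0 i is Some j then g j else x].

Lemma fcons0 w M x (g : {ffun 'I_w -> 'I_M}) : fcons x g ord0 = x.
Proof. by rewrite ffunE unlift_none. Qed.

Lemma fconsS w M x (g : {ffun 'I_w -> 'I_M}) j : fcons x g (lift ord0 j) = g j.
Proof. by rewrite ffunE liftK. Qed.

Lemma sum_ffunS (V : nmodType) w M (F : {ffun 'I_w.+1 -> 'I_M} -> V) :
  \sum_(n : {ffun 'I_w.+1 -> 'I_M}) F n = \sum_(x : 'I_M) \sum_(g : {ffun 'I_w -> 'I_M}) F (fcons x g).
Proof.
rewrite pair_big /=.
rewrite (reindex (fun p : 'I_M * {ffun 'I_w -> 'I_M} => fcons p.1 p.2)) //=.
apply: onW_bij.
exists (fun n : {ffun 'I_w.+1 -> 'I_M} => ((n ord0, [ffun j : 'I_w => n (lift ord0 j)]) : 'I_M * {ffun 'I_w -> 'I_M})).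
  case=> x g /=; rewrite fcons0; congr pair; apply/ffunP => j; by rewrite ffunE fconsS.
move=> n; apply/ffunP => i; rewrite ffunE.
by case: unliftP => [j ->|->]; rewrite ?ffunE.
Qed.

Lemma sum_ffun1 (V : nmodType) M (F : {ffun 'I_1 -> 'I_M} -> V) :
  \sum_(n : {ffun 'I_1 -> 'I_M}) F n = \sum_(x : 'I_M) F [ffun _ => x].
Proof.
rewrite (reindex (fun x : 'I_M => [ffun _ : 'I_1 => x])) //=.
apply: onW_bij.
exists (fun n : {ffun 'I_1 -> 'I_M} => n ord0); first by move=> x; rewrite ffunE.
move=> n; apply/ffunP => i; rewrite ffunE; by rewrite (ord1 i).
Qed.

Lemma Ncap_ext v (h1 h2 : 'I_v -> nat) i : (forall k, h1 k = h2 k) -> Ncap h1 i = Ncap h2 i.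
Proof. by move=> e; apply: eq_bigr => k _; rewrite e. Qed.

Lemma nlast_ext v (h1 h2 : 'I_v -> nat) : (forall k, h1 k = h2 k) -> nlast h1 = nlast h2.
Proof. by move=> e; apply: eq_bigr => k _; rewrite e. Qed.

Lemma Ncap_0S w (h : 'I_w.+1 -> nat) :
  Ncap h 0 = (h ord0 + Ncap (fun j : 'I_w => h (lift ord0 j)) 0)%N.
Proof. by rewrite /Ncap !big_mkcond big_ord_recl. Qed.

Lemma Ncap_SS w (h : 'I_w.+1 -> nat) i :
  Ncap h i.+1 = Ncap (fun j : 'I_w => h (lift ord0 j)) i.
Proof. rewrite /Ncap big_mkcond [RHS]big_mkcond big_ord_recl /= add0n; apply: eq_bigr => k _; by rewrite /bump /= ltnS. Qed.

Lemma nlast_S w (h : 'I_w.+2 -> nat) :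
  nlast h = nlast (fun j : 'I_w.+1 => h (lift ord0 j)).
Proof. rewrite /nlast big_mkcond [RHS]big_mkcond big_ord_recl /= add0n; apply: eq_bigr => k _; by rewrite /bump /=. Qed.



Section Comb.
Variable R : numFieldType.
Variable q : R.
Hypothesis hq : `|q| < 1.
Variable M : nat.

Notation f := (qfac q).
Let fn0 := qfac_neq0 hq.

Definition coreT v (n : 'I_v -> nat) : R :=
  q ^+ ((\sum_(i < v) Ncap n i * (Ncap n i).+1) + nlast n)
  * (\prod_(k < v | (val k < v.-1)%N) (qfac q (n k))^-1)
  * (qfac q (1 + 2 * nlast n))^-1
  * (qpoch (-1) (q ^+ 3) (nlast n) / qpoch (-1) q (nlast n))
  * (1 + q - q ^+ (1 + nlast n)).

Lemma lhs_core v L (n : 'I_v -> nat) :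
  lhs_term L q n = coreT n * (f (2 * L + 1) * inv_qfac q (L%:Z - (Ncap n 0)%:Z)).
Proof. rewrite /lhs_term /coreT /=; ring. Qed.

Lemma coreT_ext v (h1 h2 : 'I_v -> nat) : (forall k, h1 k = h2 k) -> coreT h1 = coreT h2.
Proof.
move=> e; rewrite /coreT (nlast_ext e).
rewrite (eq_bigr (fun i : 'I_v => Ncap h2 i * (Ncap h2 i).+1)%N); last by move=> i _; rewrite (Ncap_ext _ e).
rewrite (eq_bigr (fun k : 'I_v => (f (h2 k))^-1)) //; by move=> k _; rewrite e.
Qed.

Lemma core_split w (h : 'I_w.+2 -> nat) :
  coreT h = q ^+ (Ncap h 0 * (Ncap h 0).+1) * (f (h ord0))^-1 * coreT (fun j : 'I_w.+1 => h (lift ord0 j)).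
Proof.
set g := fun j : 'I_w.+1 => h (lift ord0 j).
have hs : (\sum_(i < w.+2) Ncap h i * (Ncap h i).+1 =
   Ncap h 0 * (Ncap h 0).+1 + \sum_(i < w.+1) Ncap g i * (Ncap g i).+1)%N.
  rewrite big_ord_recl; congr (_ + _)%N; apply: eq_bigr => i _.
  by rewrite /bump /= Ncap_SS.
have hp : \prod_(k < w.+2 | (val k < w.+1)%N) (f (h k))^-1 =
   (f (h ord0))^-1 * \prod_(k < w.+1 | (val k < w)%N) (f (g k))^-1.
  by rewrite big_mkcond big_ord_recl /= [in RHS]big_mkcond.
rewrite /coreT /= hs hp -nlast_S -/g -!addnA exprD; ring.
Qed.

Lemma core1 (h : 'I_1 -> nat) : coreT h = q ^+ (h ord0 * (h ord0).+1) * Bs q (h ord0).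
Proof.
have e1 : Ncap h 0 = h ord0 by rewrite /Ncap big_mkcond big_ord1.
have e2 : nlast h = h ord0 by rewrite /nlast big_mkcond big_ord1.
rewrite /coreT big_ord1 e1 e2 big_mkcond big_ord1 /= /Bs exprD; ring.
Qed.

Definition Kf v N := \sum_(n : {ffun 'I_v -> 'I_M})
  (if Ncap (fun k => val (n k)) 0 == N then coreT (fun k => val (n k)) else 0).

Lemma sum_ordM (F : nat -> R) N : (N < M)%N ->
  \sum_(x : 'I_M) (if val x == N then F (val x) else 0) = F N.
Proof.
move=> hN; rewrite (bigD1 (Ordinal hN)) //= eqxx big1 ?addr0 // => x hx.
rewrite ifF //; apply/negbTE; move: hx; apply: contra => /eqP e; apply/eqP; exact: val_inj.
Qed.

Lemma Kf1 N : (N < M)%N -> Kf 1 N = q ^+ (N * N.+1) * bet q 0 N.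
Proof.
move=> hN; rewrite /Kf sum_ffun1.
rewrite (eq_bigr (fun x : 'I_M => if val x == N then q ^+ (val x * (val x).+1) * Bs q (val x) else 0)).
  by rewrite (sum_ordM (fun t => q ^+ (t * t.+1) * Bs q t)).
move=> x _.
have e1 : Ncap (fun k => val ([ffun _ : 'I_1 => x] k)) 0 = val x by rewrite /Ncap big_mkcond big_ord1 ffunE.
by rewrite e1 core1 ffunE.
Qed.

Lemma KfS w N : (N < M)%N -> Kf w.+2 N = \sum_(x : 'I_M)
  (if (val x < N.+1)%N then q ^+ (N * N.+1) * (f (val x))^-1 * Kf w.+1 (N - val x)%N else 0).
Proof.
move=> hN; rewrite /Kf sum_ffunS; apply: eq_bigr => x _.
rewrite (eq_bigr (fun g : {ffun 'I_w.+1 -> 'I_M} =>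
   if ((val x + Ncap (fun k => val (g k)) 0)%N == N) then
     q ^+ (N * N.+1) * (f (val x))^-1 * coreT (fun k => val (g k)) else 0)); last first.
  move=> g _.
  have eN : Ncap (fun k => val (fcons x g k)) 0 = (val x + Ncap (fun k => val (g k)) 0)%N.
    rewrite Ncap_0S fcons0 (Ncap_ext (h1 := fun j => val (fcons x g (lift ord0 j))) (h2 := fun k => val (g k))) //.
    by move=> k; rewrite fconsS.
  rewrite core_split eN fcons0.
  rewrite (coreT_ext (h1 := fun j => val (fcons x g (lift ord0 j))) (h2 := fun k => val (g k))); last by move=> k; rewrite fconsS.
  by case: eqP => // ->.
case: ltnP => hx.
  rewrite mulr_sumr; apply: eq_bigr => g _.
  by case: eqP => e1; case: eqP => e2; rewrite ?mulr0 //; exfalso; move: e1 e2 hx; rewrite -[val x]/(nat_of_ord x); lia.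
rewrite big1 // => g _; rewrite ifF //; apply/negbTE; apply/eqP; move: hx; rewrite -[val x]/(nat_of_ord x); lia.
Qed.

Lemma Kf_closed w N : (N < M)%N -> Kf w.+1 N = q ^+ (N * N.+1) * bet q w N.
Proof.
elim: w N => [|w IH] N hN; first exact: Kf1.
rewrite KfS //.
rewrite -(big_mkord xpredT (fun t => if (t < N.+1)%N then q ^+ (N * N.+1) * (f t)^-1 * Kf w.+1 (N - t)%N else 0)).
rewrite sum_trunc //.
rewrite /= mulr_sumr big_nat_rev /=.
apply: eq_big_nat => k /andP[_ hk]; rewrite ltnS in hk.
rewrite add0n subSS IH; last by lia.
have -> : (N - (N - k) = k)%N by lia.
ring.
Qed.

Lemma c_expand L m :
  f (2 * L + 1) * inv_qfac q (L%:Z - m%:Z) =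
  \sum_(0 <= N < L.+1) (if m == N then f (2 * L + 1) * inv_qfac q (L%:Z - N%:Z) else 0).
Proof.
case: (leqP m L) => hm.
  have hm' : m \in iota 0 L.+1 by rewrite mem_iota; apply/andP; split; lia.
  rewrite (bigD1_seq m hm') ?iota_uniq //=.
  rewrite eqxx big1 ?addr0 // => N /negbTE hN; by rewrite eq_sym hN.
rewrite big1_seq; last first.
  move=> N /andP[_]; rewrite mem_iota => /andP[_ hN]; rewrite ifF //; apply/negbTE; lia.
case E: (L%:Z - m%:Z) => [k|k]; first by lia.
by rewrite mulr0.
Qed.

Lemma lhs_eq w L : (L < M)%N ->
  \sum_(n : {ffun 'I_w.+1 -> 'I_M}) lhs_term L q (fun k => val (n k)) = f (2 * L + 1) * bet q w.+1 L.
Proof.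
move=> hLM.
rewrite (eq_bigr (fun n : {ffun 'I_w.+1 -> 'I_M} => \sum_(0 <= N < L.+1)
   (if Ncap (fun k => val (n k)) 0 == N then coreT (fun k => val (n k)) else 0) * (f (2 * L + 1) * inv_qfac q (L%:Z - N%:Z)))); last first.
  move=> n _; rewrite lhs_core c_expand mulr_sumr; apply: eq_big_nat => N _.
  by case: eqP; rewrite ?mul0r ?mulr0.
rewrite exchange_big /=.
rewrite (eq_big_nat _ _ (F2 := fun N => Kf w.+1 N * (f (2 * L + 1) * inv_qfac q (L%:Z - N%:Z)))); last first.
  by move=> N _; rewrite /Kf mulr_suml.
rewrite /= mulr_sumr; apply: eq_big_nat => N /andP[_ hN]; rewrite ltnS in hN.
rewrite Kf_closed; last by lia.
have -> : (L%:Z - N%:Z = Posz (L - N)) by lia.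
rewrite /=; ring.
Qed.

End Comb.

Theorem mainTheorem9 (R : numFieldType) (q : R) (v L M : nat) :
  `|q| < 1 -> (1 <= v)%N -> (L < M)%N ->
  \sum_(n : {ffun 'I_v -> 'I_M}) lhs_term L q (fun k => val (n k))
  = \sum_(0 <= k < 2 * M + 1) rhs_term v L q (k%:Z - M%:Z).
Proof.
move=> hq hv hLM.
case: v hv => [//|w] _.
rewrite lhs_eq // rhs_eq // bet_closed //.
rewrite mulr_sumr; apply: eq_big_nat => r /andP[_ hr]; rewrite ltnS in hr.
rewrite /qb.
have -> : (L + L.+1 - (L - r) = (L + r).+1)%N by lia.
have -> : (2 * L + 1 = L + L.+1)%N by lia.
field; by rewrite !(qfac_neq0 hq).
Qed.
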